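(* Let $M$ be a free $\mathbb{T}$-module with a finite $\mathbb{T}$-basis, $V$ its associated complex vector space, and $(\cdot,\cdot)$ a bicomplex scalar product on $M$ which is hyperbolic positive and closed on $V$. Then for all $|\phi\rangle,|\psi\rangle\in M$ and $k=1,2$, $$\langle\phi_{\mathbf{e_k}}|\psi_{\mathbf{e_k}}\rangle=P_k\big(\langle\phi|\psi\rangle\big),$$ where $|\phi_{\mathbf{e_k}}\rangle=P_k(|\phi\rangle)$, $|\psi_{\mathbf{e_k}}\rangle=P_k(|\psi\rangle)$ and $\langle\alpha|\beta\rangle:=(|\alpha\rangle,|\beta\rangle)$.
   Context: Bicomplex numbers: $\mathbb{T}=\{z_1+z_2\mathbf{i_2}: z_1,z_2\in\mathbb{C}(\mathbf{i_1})\}$, $\mathbb{C}(\mathbf{i_1})=\{x+y\mathbf{i_1}: x,y\in\mathbb{R}\}$, $\mathbf{i_1}^2=\mathbf{i_2}^2=-1$, $\mathbf{i_1}\mathbf{i_2}=\mathbf{i_2}\mathbf{i_1}=\mathbf{j}$, $\mathbf{j}^2=1$ (commutative). Hyperbolic numbers $\mathbb{D}=\{x+y\mathbf{j}:x,y\in\mathbb{R}\}$. Idempotents $\mathbf{e_1}=(1+\mathbf{j})/2$, $\mathbf{e_2}=(1-\mathbf{j})/2$. Every $w=z_1+z_2\mathbf{i_2}$ is uniquely $w=(z_1-z_2\mathbf{i_1})\mathbf{e_1}+(z_1+z_2\mathbf{i_1})\mathbf{e_2}$; $P_1(w)=z_1-z_2\mathbf{i_1}$, $P_2(w)=z_1+z_2\mathbf{i_1}$.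 Conjugation: $(z_1+z_2\mathbf{i_2})^{\dagger_3}=\overline{z_1}-\overline{z_2}\mathbf{i_2}$. $\mathbb{D}^+=\{a\mathbf{e_1}+b\mathbf{e_2}: a,b\ge 0\}$. $M$ has $\mathbb{T}$-basis $\{|m_1\rangle,\dots,|m_n\rangle\}$, $V=\{\sum x_l|m_l\rangle: x_l\in\mathbb{C}(\mathbf{i_1})\}$; for $|\phi\rangle=\sum x_l|m_l\rangle$ with $x_l=x_{1l}\mathbf{e_1}+x_{2l}\mathbf{e_2}$, $x_{kl}\in\mathbb{C}(\mathbf{i_1})$, set $P_k(|\phi\rangle)=\sum_l x_{kl}|m_l\rangle\in V$. A bicomplex scalar product is a map $(\cdot,\cdot):M\times M\to\mathbb{T}$, additive in the second argument, with $(|\phi\rangle,\alpha|\psi\rangle)=\alpha(|\phi\rangle,|\psi\rangle)$ for $\alpha\in\mathbb{T}$, $(|\phi\rangle,|\psi\rangle)=(|\psi\rangle,|\phi\rangle)^{\dagger_3}$, $(|\phi\rangle,|\phi\rangle)=0\iff|\phi\rangle=0$; hyperbolic positive: $(|\phi\rangle,|\phi\rangle)\in\mathbb{D}^+$; closed on $V$: $(|\phi\rangle,|\psi\rangle)\in\mathbb{C}(\mathbf{i_1})$ for $|\phi\rangle,|\psi\rangle\in V$. *)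

(* Defs.v *)
(* C(i1) is modelled as R[i] (mathcomp-real-closed complex)
   over an arbitrary R : realType (the real numbers). *)
From HB Require Import structures.
From mathcomp Require Import all_boot all_order all_algebra.
From mathcomp Require Import complex.
From mathcomp Require Import reals.
Set Implicit Arguments. Unset Strict Implicit. Unset Printing Implicit Defensive.
Import Order.TTheory GRing.Theory Num.Theory.
Local Open Scope ring_scope.
Local Open Scope complex_scope.

Section Bicomplex.
Variable R : realType.

(* A bicomplex number z1 + z2 i2 with z1, z2 in C(i1) = R[i]. *)
Record bicomplex := BC { bc1 : R[i] ; bc2 : R[i] }.

Definition bc_add (w v : bicomplex) := BC (bc1 w + bc1 v) (bc2 w + bc2 v).
(* (z1 + z2 i2)(w1 + w2 i2) = (z1 w1 - z2 w2) + (z1 w2 + z2 w1) i2 *)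
Definition bc_mul (w v : bicomplex) :=
  BC (bc1 w * bc1 v - bc2 w * bc2 v) (bc1 w * bc2 v + bc2 w * bc1 v).
Definition bc_zero := BC 0 0.
Definition bc_of (z : R[i]) := BC z 0.
Definition bc_dag3 (w : bicomplex) := BC ((bc1 w)^*) (- (bc2 w)^*).
(* idempotents e1 = (1+j)/2, e2 = (1-j)/2, with j = i1 i2 *)
Definition bc_j := BC 0 'i.
Definition bc_e1 := BC (1/2) ('i / 2).
Definition bc_e2 := BC (1/2) (- ('i / 2)).
Definition P1 (w : bicomplex) : R[i] := bc1 w - bc2 w * 'i.
Definition P2 (w : bicomplex) : R[i] := bc1 w + bc2 w * 'i.
Definition Pk (k : bool) (w : bicomplex) : R[i] := if k then P1 w else P2 w.
Definition in_Dplus (w : bicomplex) : Prop :=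
  exists a b : R, 0 <= a /\ 0 <= b /\
    w = bc_add (bc_mul (bc_of a%:C) bc_e1) (bc_mul (bc_of b%:C) bc_e2).

(* M : the free T-module with T-basis |m_1>, ..., |m_n>, represented by
   coordinate vectors; the l-th coordinate is the coefficient of |m_l>. *)
Definition bcmod (n : nat) := 'I_n -> bicomplex.
Definition mod_add n (f g : bcmod n) : bcmod n := fun l => bc_add (f l) (g l).
Definition mod_scale n (a : bicomplex) (f : bcmod n) : bcmod n :=
  fun l => bc_mul a (f l).
Definition mod_zero n : bcmod n := fun _ => bc_zero.
(* V = { sum x_l |m_l> : x_l in C(i1) } *)
Definition in_V n (f : bcmod n) : Prop := forall l, bc2 (f l) = 0.
Definition Pk_mod n (k : bool) (f : bcmod n) : bcmod n :=
  fun l => bc_of (Pk k (f l)).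

Definition bc_scalar_product n (sp : bcmod n -> bcmod n -> bicomplex) : Prop :=
  [/\ (forall phi psi chi, sp phi (mod_add psi chi) = bc_add (sp phi psi) (sp phi chi)),
      (forall phi psi alpha, sp phi (mod_scale alpha psi) = bc_mul alpha (sp phi psi)),
      (forall phi psi, sp phi psi = bc_dag3 (sp psi phi)) &
      (forall phi, sp phi phi = bc_zero <-> phi = @mod_zero n)].

Definition hyperbolic_positive n (sp : bcmod n -> bcmod n -> bicomplex) : Prop :=
  forall phi, in_Dplus (sp phi phi).

Definition closed_on_V n (sp : bcmod n -> bcmod n -> bicomplex) : Prop :=
  forall phi psi, in_V phi -> in_V psi -> bc2 (sp phi psi) = 0.

End Bicomplex.

(* Main.v *)
Require Import Defs.
From HB Require Import structures.
From mathcomp Require Import all_boot all_order all_algebra.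
From mathcomp Require Import complex.
From mathcomp Require Import reals.
From mathcomp Require Import ring.
From Stdlib Require Import FunctionalExtensionality.
Import GRing.Theory.
Local Open Scope ring_scope.

Section Aux.
Variable R : realType.
Local Open Scope complex_scope.

Lemma ii : 'i * 'i = -1 :> R[i].
Proof. by rewrite -expr2 sqr_i. Qed.

Lemma conji : ('i : R[i])^* = - 'i.
Proof. by apply/eqP; rewrite eq_complex /= oppr0 !eqxx. Qed.

Lemma conji' : (Complex 0 (-1) : R[i]) = - 'i.
Proof. by apply/eqP; rewrite eq_complex /= oppr0 !eqxx. Qed.

Lemma P1M (w v : bicomplex R) : P1 (bc_mul w v) = P1 w * P1 v.
Proof.
case: w v => [w1 w2] [v1 v2]; rewrite /P1 /=.
apply/eqP; rewrite -subr_eq0; apply/eqP.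
transitivity (- (w2 * v2) * ('i * 'i + 1)); first ring.
by rewrite ii addNr mulr0.
Qed.

Lemma P2M (w v : bicomplex R) : P2 (bc_mul w v) = P2 w * P2 v.
Proof.
case: w v => [w1 w2] [v1 v2]; rewrite /P2 /=.
apply/eqP; rewrite -subr_eq0; apply/eqP.
transitivity (- (w2 * v2) * ('i * 'i + 1)); first ring.
by rewrite ii addNr mulr0.
Qed.

Lemma PkM k (w v : bicomplex R) : Pk k (bc_mul w v) = Pk k w * Pk k v.
Proof. by case: k; [apply: P1M | apply: P2M]. Qed.

Lemma PkD k (w v : bicomplex R) : Pk k (bc_add w v) = Pk k w + Pk k v.
Proof. by case: k; rewrite /= /P1 /P2 /=; ring. Qed.

Lemma PkJ k (w : bicomplex R) : Pk k (bc_dag3 w) = (Pk k w)^*.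
Proof.
case: k; rewrite /= /P1 /P2 /= ?rmorphB ?rmorphD rmorphM /= conji'; ring.
Qed.

Lemma Pk_of k (z : R[i]) : Pk k (bc_of z) = z.
Proof. by case: k; rewrite /= /P1 /P2 /= mul0r ?subr0 ?addr0. Qed.

Lemma P1e1 : P1 (bc_e1 R) = 1.
Proof.
rewrite /P1 /=; apply/eqP; rewrite -subr_eq0; apply/eqP.
transitivity (- ('i * 'i + 1) / 2 : R[i]); first by field.
by rewrite ii addNr oppr0 mul0r.
Qed.

Lemma P2e2 : P2 (bc_e2 R) = 1.
Proof.
rewrite /P2 /=; apply/eqP; rewrite -subr_eq0; apply/eqP.
transitivity (- ('i * 'i + 1) / 2 : R[i]); first by field.
by rewrite ii addNr oppr0 mul0r.
Qed.

Lemma P1e2 : P1 (bc_e2 R) = 0.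
Proof.
rewrite /P1 /=.
transitivity (('i * 'i + 1) / 2 : R[i]); first by field.
by rewrite ii addNr mul0r.
Qed.

Lemma P2e1 : P2 (bc_e1 R) = 0.
Proof.
rewrite /P2 /=.
transitivity (('i * 'i + 1) / 2 : R[i]); first by field.
by rewrite ii addNr mul0r.
Qed.

Lemma bc_decomp (w : bicomplex R) :
  w = bc_add (bc_mul (bc_e1 R) (bc_of (P1 w))) (bc_mul (bc_e2 R) (bc_of (P2 w))).
Proof.
case: w => [z1 z2]; rewrite /bc_add /bc_mul /P1 /P2 /=; congr BC.
  by field.
apply/eqP; rewrite -subr_eq0; apply/eqP.
transitivity (z2 * ('i * 'i + 1) : R[i]); first by field.
by rewrite ii addNr mulr0.
Qed.

Lemma dagD (w v : bicomplex R) : bc_dag3 (bc_add w v) = bc_add (bc_dag3 w) (bc_dag3 v).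
Proof. by rewrite /bc_dag3 /bc_add /= !rmorphD opprD. Qed.

Lemma dagM (w v : bicomplex R) : bc_dag3 (bc_mul w v) = bc_mul (bc_dag3 w) (bc_dag3 v).
Proof.
by rewrite /bc_dag3 /bc_mul /= rmorphB rmorphD !rmorphM; congr BC; ring.
Qed.

End Aux.

(* k = true stands for k = 1 (e1), k = false for k = 2 (e2). *)
Theorem mainTheorem18 (R : realType) (n : nat)
  (sp : bcmod R n -> bcmod R n -> bicomplex R) :
  bc_scalar_product sp -> hyperbolic_positive sp -> closed_on_V sp ->
  forall (phi psi : bcmod R n) (k : bool),
    sp (Pk_mod k phi) (Pk_mod k psi) = bc_of (Pk k (sp phi psi)).
Proof.
move=> [hadd hsc hsym _] _ hV phi psi k.
have addl x y z : sp (mod_add x y) z = bc_add (sp x z) (sp y z).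
  by rewrite hsym hadd dagD -!hsym.
have scl a x z : sp (mod_scale a x) z = bc_mul (bc_dag3 a) (sp x z).
  by rewrite hsym hsc dagM -hsym.
have dec (f : bcmod R n) : f = mod_add (mod_scale (bc_e1 R) (Pk_mod true f))
                                     (mod_scale (bc_e2 R) (Pk_mod false f)).
  by apply: functional_extensionality => l; exact: bc_decomp.
have inV (f : bcmod R n) k' : in_V (Pk_mod k' f) by [].
have Hk : sp (Pk_mod k phi) (Pk_mod k psi) = bc_of (bc1 (sp (Pk_mod k phi) (Pk_mod k psi))).
  by case E: (sp _ _) => [a b] /=; move: (hV _ _ (inV phi k) (inV psi k)); rewrite E /= => ->.
rewrite Hk; congr bc_of.
rewrite {2}(dec phi) {2}(dec psi).
rewrite !addl !hadd !scl !hsc !PkD !PkM !PkJ.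
have ->: bc1 (sp (Pk_mod k phi) (Pk_mod k psi)) = Pk k (sp (Pk_mod k phi) (Pk_mod k psi)).
  by rewrite {2}Hk Pk_of.
case: k {Hk}.
  rewrite (@P1e1 R : Pk true (bc_e1 R) = 1) (@P1e2 R : Pk true (bc_e2 R) = 0) conjc0 conjc1; ring.
rewrite (@P2e1 R : Pk false (bc_e1 R) = 0) (@P2e2 R : Pk false (bc_e2 R) = 1) conjc0 conjc1; ring.
Qed.
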